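(* Let $(\Gamma,\gamma)$ be a spin network and let $(\Gamma',\gamma)$ be obtained by reversing the cyclic ordering at one vertex whose incident edges have colors $a,b,c$ (the underlying graph and coloring unchanged). Then $$\langle\Gamma',\gamma\rangle^P=(-1)^{(a(a-1)+b(b-1)+c(c-1))/2}\,\langle\Gamma,\gamma\rangle^P,$$ and the same relation holds for the standard evaluation $\langle\cdot\rangle$.
   Context: A cubic ribbon graph $\Gamma$ is a finite graph all of whose vertices are trivalent (multiple edges and loops are allowed, as are components that are circles without vertices), together with a cyclic ordering of the three edge-ends at each vertex. A coloring $\gamma$ assigns to each edge $e\in E(\Gamma)$ a natural number $\gamma_e$; the pair $(\Gamma,\gamma)$ is a spin network. It is admissible if at every vertex with incident colors $a,b,c$ the sum $a+b+c$ is even and $|a-b|\le c\le a+b$. The Penrose evaluation $\langle\Gamma,\gamma\rangle^P$ is $0$ if $(\Gamma,\gamma)$ is not admissible; otherwise thicken $\Gamma$ into a surface using the cyclic orderings (vertices become disks, edges become untwisted bands), replace each edge colored $a$ by $a$ parallel strands in its band with the antisymmetrizer $\sum_{\sigma\in S_a}\mathrm{sgn}(\sigma)\sigma$ inserted, and in the disk of each vertex with incident colors $a,b,c$ join $(a+b-c)/2$ strands of the $a$-edge to the $b$-edge, $(a-b+c)/2$ strands of the $a$-edge to the $c$-edge and $(-a+b+c)/2$ strands of the $b$-edge to the $c$-edge by pairwise non-crossing arcs; expanding gives a signed sum of collections of closed loops, and a collection of $n$ loops is assigned the value $(-2)^n$. The (standard) evaluation is $\langle\Gamma,\gamma\rangle=\langle\Gamma,\gamma\rangle^P/\mathcal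 I!$, where $\mathcal I!=\prod_{v\in V(\Gamma)}\big(\tfrac{-a_v+b_v+c_v}{2}\big)!\big(\tfrac{a_v-b_v+c_v}{2}\big)!\big(\tfrac{a_v+b_v-c_v}{2}\big)!$ and $a_v,b_v,c_v$ are the colors of the edges at $v$ (and $\langle\Gamma,\gamma\rangle=0$ if not admissible). *)

(* Defs.v *)
From HB Require Import structures.
From mathcomp Require Import all_boot all_order all_algebra all_fingroup.
Set Implicit Arguments. Unset Strict Implicit. Unset Printing Implicit Defensive.
Import GRing.Theory Num.Theory.

(*  - E : finType of edges having endpoints; each edge has two ends         *)
(*    (darts) indexed by bool: a dart is d : E * bool.                      *)
(*  - rot : dart -> dart is the cyclic ordering: rot d is the next dart     *)
(*    (counterclockwise) at the vertex of d.  Vertices = orbits of rot,     *)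
(*    which must all have size 3 (trivalence): rot^3 = id, no fixed points. *)
(*    Loops (both ends of an edge at one vertex) and multiple edges are     *)
(*    allowed.                                                              *)
(*  - C : finType of vertex-free circle components.                         *)

Definition cubic (E : finType) (rot : E * bool -> E * bool) : Prop :=
  (forall d, rot (rot (rot d)) = d) /\ (forall d, rot d != d).

Section Penrose.
Variables (E C : finType) (rot : E * bool -> E * bool) (col : E -> nat) (colC : C -> nat).

Definition dcol (d : E * bool) : nat := col d.1.

Definition admissible : bool :=
  [forall d : E * bool,
    let a := dcol d in let b := dcol (rot d) in let c := dcol (rot (rot d)) in
    [&& ~~ odd (a + b + c), a - b <= c, b - a <= c & c <= a + b]].

(* strand endpoints: the dcol d points of the edge-end d on the boundary of
   the vertex disk, indexed 0 .. dcol d - 1 in counterclockwise order *)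
Definition point := {d : E * bool & 'I_(dcol d)}.
Definition pdart (p : point) : E * bool := tag p.
Definition pidx (p : point) : nat := tagged p.

(* non-crossing arcs in the disk of a vertex: between dart d (color a) and
   the next dart d' = rot d (color b), with c the color of the third dart,
   the last x = (a+b-c)/2 points of d are joined to the first x points of d'
   (point a-1-k of d to point k of d') *)
Definition varc1 (p q : point) : bool :=
  let a := dcol (pdart p) in let b := dcol (pdart q) in
  let c := dcol (rot (pdart q)) in
  [&& pdart q == rot (pdart p), pidx p + pidx q + 1 == a & pidx q < (a + b - c) %/ 2].

Definition varc (p q : point) : bool := varc1 p q || varc1 q p.

(* the untwisted band of edge e with the antisymmetrizer term s : 'S_(col e)
   inserted: the strand starting at point i of end (e,false) arrives at end
   (e,true) at the point with counterclockwise index col e - 1 - s i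
   (an untwisted band in the oriented thickening reverses counterclockwise
   indices) *)
Definition earc1 (s : forall e : E, 'S_(col e)) (p q : point) : bool :=
  [&& (pdart p).1 == (pdart q).1, ~~ (pdart p).2, (pdart q).2 &
      pidx q + (s (pdart p).1 (tagged p) : nat) + 1 == col (pdart p).1].

Definition earc s (p q : point) : bool := earc1 s p q || earc1 s q p.

(* number of closed loops = number of connected components of the graph on
   strand endpoints whose edges are the arcs *)
Definition nloops (s : forall e : E, 'S_(col e)) : nat :=
  n_comp (fun p q : point => varc p q || earc s p q) predT.

Definition penroseP : int :=
  (if admissible then
    (\sum_(s : {dffun forall e : E, 'S_(col e)})
       (\prod_(e : E) (-1) ^+ odd_perm (s e)) * (-2) ^+ nloops s)
    * \prod_(c : C) (\sum_(t : 'S_(colC c)) (-1) ^+ odd_perm t * (-2) ^+ #|porbits t|)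
  else 0)%R.

(* I! : product over vertices of the three factorials; written as a product
   over darts d of ((a+b-c)/2)! with a,b,c the colors of d, rot d, rot(rot d)
   (each vertex contributes exactly its three factorials) *)
Definition Ifact : nat :=
  \prod_(d : E * bool)
    ((dcol d + dcol (rot d) - dcol (rot (rot d))) %/ 2)`!.

Definition std_eval : rat :=
  (if admissible then (penroseP%:~R : rat) / (Ifact%:R) else 0)%R.

End Penrose.

Definition reverse_at (E : finType) (rot : E * bool -> E * bool) (d0 : E * bool)
  (d : E * bool) : E * bool :=
  if d \in [:: d0; rot d0; rot (rot d0)] then rot (rot d) else rot d.

(* Main.v *)
Require Import Defs.
From HB Require Import structures.
From mathcomp Require Import all_boot all_order all_algebra all_fingroup.
From Stdlib Require Import Lia.
Import GRing.Theory Num.Theory.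
Set Implicit Arguments. Unset Strict Implicit. Unset Printing Implicit Defensive.

Ltac nlia := repeat (match goal with H : context[subn] |- _ => rewrite -minusE in H | H : context[addn] |- _ => rewrite -plusE in H | H : context[muln] |- _ => rewrite -multE in H end); rewrite -?plusE -?minusE -?multE; lia.

Definition revp n : 'S_n := perm (@rev_ord_inj n).

Lemma revpE n (i : 'I_n) : revp n i = rev_ord i.
Proof. by rewrite permE. Qed.

Lemma revpK n : (revp n * revp n = 1)%g.
Proof. by apply/permP => i; rewrite permM !revpE rev_ordK perm1. Qed.

Lemma revp_lift n : revp n.+1 = lift_perm ord0 ord_max (revp n).
Proof.
apply/permP => x; case: (unliftP ord0 x) => [k|] ->.
- rewrite lift_perm_lift !revpE; apply/val_inj => /=; case: k => [k hk] /=; simpl in hk.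
  move/ltP: hk => hk; rewrite /bump /=; case: (leqP n (n - k.+1)) => /leP H /=; nlia.
- rewrite lift_perm_id revpE; apply/val_inj => /=; nlia.
Qed.

Lemma odd_revp n : odd_perm (revp n) = odd 'C(n, 2).
Proof.
elim: n => [|n IH].
  have -> : revp 0 = 1%g by apply/permP => -[].
  by rewrite odd_perm1.
by rewrite revp_lift odd_lift_perm IH binS bin1 oddD /= addbC.
Qed.

Lemma arith1 n x y : x < n -> y < n ->
  ((n - x.+1) + (n - y.+1) + 1 == n) = (x + y + 1 == n).
Proof. move=> /ltP hx /ltP hy; apply/eqP/eqP; nlia. Qed.

Lemma arith2 a b K i j : i < a -> j < b ->
  ((a - i.+1 + (b - j.+1) + 1 == a) && (b - j.+1 < K)) = ((j + i + 1 == b) && (i < K)).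
Proof.
move=> /ltP ha /ltP hb.
have [h|/eqP h] := eqVneq (j + i + 1) b.
- have -> : b - j.+1 = i by nlia.
  have -> : (a - i.+1 + i + 1 == a) by apply/eqP; nlia.
  done.
- have -> : (a - i.+1 + (b - j.+1) + 1 == a) = false by apply/eqP; nlia.
  done.
Qed.

Lemma adm_sym x y z : [&& ~~ odd (x + y + z), x - y <= z, y - x <= z & z <= x + y] =
  [&& ~~ odd (x + z + y), x - z <= y, z - x <= y & y <= x + z].
Proof.
rewrite !leq_subLR (addnAC x z y) (addnC z y) (addnC x z) (addnC x y).
by case: (~~ _); case: (x <= _); case: (y <= _); case: (z <= _).
Qed.

Section Main.
Variables (E C : finType) (rot : E * bool -> E * bool) (col : E -> nat)
  (colC : C -> nat) (d0 : E * bool).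
Hypothesis Hc : cubic rot.
Local Notation V0 := [:: d0; rot d0; rot (rot d0)].
Local Notation rot' := (reverse_at rot d0).

Lemma rot3 d : rot (rot (rot d)) = d. Proof. by case: Hc. Qed.
Lemma rot_inj : injective rot.
Proof. by apply: (@can_inj _ _ _ (fun d => rot (rot d))) => d; exact: rot3. Qed.

Lemma inV0_rot d : (rot d \in V0) = (d \in V0).
Proof.
have e1 : (rot d == d0) = (d == rot (rot d0)).
  by apply/eqP/eqP => [<-|->]; rewrite ?rot3.
rewrite !inE e1 !(inj_eq rot_inj).
by case: (d == d0); case: (d == rot d0); case: (d == rot (rot d0)).
Qed.

Lemma rot'_in d : d \in V0 -> rot' d = rot (rot d).
Proof. by rewrite /reverse_at => ->. Qed.
Lemma rot'_out d : d \notin V0 -> rot' d = rot d.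
Proof. by rewrite /reverse_at => /negbTE ->. Qed.

Lemma adm_eq : admissible rot' col = admissible rot col.
Proof.
apply: eq_forallb => d /=; rewrite /dcol.
case hd : (d \in V0).
- rewrite (rot'_in hd) (rot'_in (d := rot (rot d))) ?inV0_rot ?hd // rot3.
  by rewrite adm_sym.
- rewrite (rot'_out (d := d)) ?hd // (rot'_out (d := rot d)) ?inV0_rot ?hd //.
Qed.

Definition hV d := if d \in V0 then rot (rot d) else d.

Lemma hV_inj : injective hV.
Proof.
move=> x y; rewrite /hV; case hx: (x \in V0); case hy: (y \in V0) => Exy.
- exact/rot_inj/rot_inj.
- by move: hy; rewrite -Exy !inV0_rot hx.
- by move: hx; rewrite Exy !inV0_rot hy.
- done.
Qed.

Lemma Ifact_eq : Ifact rot' col = Ifact rot col.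
Proof.
rewrite /Ifact [RHS](reindex_inj hV_inj); apply: eq_bigr => d _.
rewrite /hV /dcol; case hd : (d \in V0).
- rewrite (rot'_in hd) (rot'_in (d := rot (rot d))) ?inV0_rot ?hd // !rot3.
  by rewrite addnC.
- rewrite (rot'_out (d := d)) ?hd // (rot'_out (d := rot d)) ?inV0_rot ?hd //.
Qed.


Definition fpt (p : point col) : point col :=
  existT (fun d => 'I_(dcol col d)) (tag p)
    (if tag p \in V0 then rev_ord (tagged p) else tagged p).

Lemma fptK : involutive fpt.
Proof. by case=> d i; rewrite /fpt /=; case: (d \in V0); rewrite ?rev_ordK. Qed.

Definition Rd (d : E * bool) : 'S_(dcol col d) :=
  if d \in V0 then revp _ else 1%g.

Lemma RdK d : (Rd d * Rd d = 1)%g.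
Proof. by rewrite /Rd; case: (d \in V0); rewrite ?revpK ?mulg1. Qed.

Definition Fs (s : {dffun forall e : E, 'S_(col e)}) : {dffun forall e : E, 'S_(col e)} :=
  @finfun E (fun e => 'S_(col e)) (fun e => (Rd (e, false) * s e * Rd (e, true))%g).

Lemma FsK : involutive Fs.
Proof.
move=> s; apply/ffunP => e; rewrite !ffunE; apply/permP => x.
rewrite !permM /Rd.
case: ((e, false) \in V0); case: ((e, true) \in V0);
  by rewrite ?revpE ?rev_ordK ?perm1.
Qed.

Lemma earc1_f (s : {dffun forall e : E, 'S_(col e)}) p q :
  earc1 (Fs s) (fpt p) (fpt q) = earc1 s p q.
Proof.
case: p => [[e1 b1] i]; case: q => [[e2 b2] j].
rewrite /earc1 /fpt /pdart /pidx /=.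
case: (eqVneq e1 e2) => [E12|]; last by [].
subst e2; move: i j; case: b1; case: b2 => i j //=.
rewrite ffunE !permM /Rd.
case: ((e1, false) \in V0); rewrite ?revpE ?rev_ordK ?perm1;
  case: ((e1, true) \in V0); rewrite ?revpE ?perm1 //=;
  by rewrite arith1 ?ltn_ord.
Qed.

Lemma varc1_f p q : varc1 rot' (fpt p) (fpt q) =
  if tag p \in V0 then varc1 rot q p else varc1 rot p q.
Proof.
case: p => [d i]; case: q => [d' j]; rewrite /varc1 /fpt /pdart /pidx /=.
case hd: (d \in V0); case hd': (d' \in V0).
- rewrite (rot'_in hd) (rot'_in hd').
  have -> : (d' == rot (rot d)) = (d == rot d').
    by apply/eqP/eqP => [->|->]; rewrite ?rot3.
  case: eqP => [Ed|] //=; subst d; rewrite /dcol.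
  rewrite (addnC (col d'.1)) arith2 //.
- rewrite (rot'_in hd); have -> : (d' == rot (rot d)) = false.
    by apply/eqP => Ed; move: hd'; rewrite Ed !inV0_rot hd.
  have -> : (d == rot d') = false.
    by apply/eqP => Ed; move: hd; rewrite Ed inV0_rot hd'.
  by rewrite !andFb.
- have -> : (d' == rot' d) = false.
    by rewrite rot'_out ?hd //; apply/eqP => Ed; move: hd'; rewrite Ed inV0_rot hd.
  have -> : (d' == rot d) = false.
    by apply/eqP => Ed; move: hd'; rewrite Ed inV0_rot hd.
  by [].
- by rewrite (rot'_out (d := d)) ?hd // (rot'_out (d := d')) ?hd'.
Qed.

Lemma varc1_V0 (p q : point col) : varc1 rot p q -> (tag q \in V0) = (tag p \in V0).
Proof. by rewrite /varc1 /pdart; case/and3P => /eqP -> _ _; rewrite inV0_rot. Qed.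

Lemma varc_f (p q : point col) : varc rot' (fpt p) (fpt q) = varc rot p q.
Proof.
have F (u v : point col) : (tag u \in V0) != (tag v \in V0) -> varc1 rot u v = false.
  by move=> H; apply/negbTE/negP => /varc1_V0 Ev; rewrite Ev eqxx in H.
rewrite /varc !varc1_f.
case hp: (tag p \in V0); case hq: (tag q \in V0) => //.
- by rewrite orbC.
- by rewrite !F ?hp ?hq.
- by rewrite !F ?hp ?hq.
Qed.

Lemma nloops_f (s : {dffun forall e : E, 'S_(col e)}) :
  nloops rot' (Fs s) = nloops rot s.
Proof.
rewrite /nloops.
have sym1 : forall r (t : forall e : E, 'S_(col e)),
    connect_sym (fun p q : point col => varc r p q || earc t p q).
  move=> r t; apply: sym_connect_sym => p q; rewrite /varc /earc.
  by case: (varc1 r p q); case: (varc1 r q p); case: (earc1 t p q); case: (earc1 t q p).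
have cl : closed (fun p q : point col => varc rot' p q || earc (Fs s) p q) predT by [].
have adj : rel_adjunction fpt (fun p q : point col => varc rot' p q || earc (Fs s) p q)
                               (fun p q : point col => varc rot p q || earc s p q) predT.
  apply: strict_adjunction => //.
  - exact: inv_inj fptK.
  - by apply/subsetP => x _; apply/codomP; exists (fpt x); rewrite fptK.
  - by move=> x y _; rewrite varc_f /earc !earc1_f.
rewrite (adjunction_n_comp fpt (sym1 _ _) (sym1 _ _) cl adj).
by apply: eq_n_comp_r.
Qed.

Lemma V0_uniq : uniq V0.
Proof.
have h1 : d0 != rot d0 by rewrite eq_sym; case: Hc.
have h2 : d0 != rot (rot d0).
  apply/eqP => Ev; move: h1; rewrite {2}Ev rot3 eqxx //.
rewrite /= !inE negb_or h1 h2 /= (inj_eq rot_inj) h1 //.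
Qed.

Lemma nbin2 n : n * n.-1 = 'C(n, 2) * 2.
Proof.
rewrite bin2 muln2; have := odd_double_half (n * n.-1).
have -> : odd (n * n.-1) = false.
  by case: n => //= m; rewrite oddM /=; case: (odd m).
by rewrite add0n.
Qed.

Local Open Scope ring_scope.

Lemma prod3 (F : E * bool -> int) x y z :
  \prod_(d <- [:: x; y; z]) F d = F x * (F y * F z).
Proof. by rewrite !big_cons big_nil mulr1. Qed.

Lemma sgn3 (x y z : nat) :
  (-1) ^+ x * ((-1) ^+ y * (-1) ^+ z) = (-1) ^+ (x + y + z) :> int.
Proof. by rewrite !exprD mulrA. Qed.

Lemma sign_Fs (s : {dffun forall e : E, 'S_(col e)}) :
  \prod_(e : E) (-1) ^+ odd_perm (Fs s e) =
  (-1) ^+ ('C(dcol col d0, 2) + 'C(dcol col (rot d0), 2) + 'C(dcol col (rot (rot d0)), 2))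
   * \prod_(e : E) ((-1) ^+ odd_perm (s e)) :> int.
Proof.
pose g (d : E * bool) : int := (-1) ^+ odd_perm (Rd d).
have -> : \prod_(e : E) (-1) ^+ odd_perm (Fs s e) =
   \prod_(e : E) ((-1) ^+ odd_perm (s e) * (g (e, true) * g (e, false))) :> int.
  apply: eq_bigr => e _; rewrite ffunE !odd_permM /g.
  by move: (odd_perm _) (odd_perm _) (odd_perm _) => [] [] [].
rewrite big_split /= mulrC; congr (_ * _).
have -> : \prod_(e : E) (g (e, true) * g (e, false)) = \prod_(d : E * bool) g d.
  rewrite -(pair_big xpredT xpredT (fun e b => g (e, b))) /=.
  by apply: eq_bigr => e _; rewrite big_bool.
have -> : \prod_(d : E * bool) g d = \prod_(d in V0) (-1) ^+ 'C(dcol col d, 2) :> int.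
  rewrite [RHS]big_mkcond /=; apply: eq_bigr => d _; rewrite /g /Rd.
  case: (d \in V0); rewrite ?odd_revp ?signr_odd //.
  by rewrite odd_perm1.
by rewrite -big_uniq ?V0_uniq // prod3 sgn3.
Qed.

Theorem main_eq :
  let a := col d0.1 in
  let b := col (rot d0).1 in
  let c := col (rot (rot d0)).1 in
  let k := ((a * a.-1 + b * b.-1 + c * c.-1) %/ 2)%N in
  penroseP rot' col colC = ((-1) ^+ k * penroseP rot col colC)%R /\
  std_eval rot' col colC = ((-1) ^+ k * std_eval rot col colC)%R.
Proof.
move=> a b c k.
have kE : k = ('C(dcol col d0, 2) + 'C(dcol col (rot d0), 2) + 'C(dcol col (rot (rot d0)), 2))%N.
  rewrite /k /a /b /c !nbin2 -!mulnDl mulnK //.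
have RI2 : forall F : {dffun forall e : E, 'S_(col e)} -> int,
    \sum_(s : {dffun forall e : E, 'S_(col e)}) F s =
    \sum_(s : {dffun forall e : E, 'S_(col e)}) F (Fs s).
  move=> F; exact: reindex_inj (inv_inj FsK).
have PE : penroseP rot' col colC = ((-1) ^+ k * penroseP rot col colC)%R.
  rewrite /penroseP adm_eq; case: (admissible rot col); last first.
    by rewrite mulr0.
  
  rewrite mulrA; congr (_ * _).
  rewrite [LHS]RI2 [RHS]mulr_sumr; apply: eq_bigr => s _.
  rewrite nloops_f [X in X * _ = _]sign_Fs -kE mulrA //.

split => //.
rewrite /std_eval adm_eq Ifact_eq PE; case: (admissible rot col); last first.
  by rewrite mulr0.

rewrite rmorphM /=. rewrite rmorphXn /= rmorphN /= rmorph1 mulrA //.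
Qed.

End Main.

Theorem lemma6p1 (E C : finType) (rot : E * bool -> E * bool)
    (col : E -> nat) (colC : C -> nat) (d0 : E * bool) :
  cubic rot ->
  let a := col d0.1 in
  let b := col (rot d0).1 in
  let c := col (rot (rot d0)).1 in
  let k := (a * a.-1 + b * b.-1 + c * c.-1) %/ 2 in
  penroseP (reverse_at rot d0) col colC = ((-1) ^+ k * penroseP rot col colC)%R /\
  std_eval (reverse_at rot d0) col colC = ((-1) ^+ k * std_eval rot col colC)%R.
Proof. move=> Hc; exact: (@main_eq E C rot col colC d0 Hc). Qed.
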